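(* Let $A_i\in\mathbb R^{d\times d}$, $i\in\mathbb N$, be matrices such that $\|A_i\|\le A^*<\infty$ for all $i$, $\sup_{i\in\mathbb N}\rho(A_i)=\rho_0<1$, and for some $p\ge1$ $$\|A\|_{p\text{-var}}=\Big(\sup_{1\le i_1<i_2<\cdots}\sum_{k=1}^\infty\|A_{i_{k+1}}-A_{i_k}\|^p\Big)^{1/p}\le A^*.$$ Then for every $\rho>\rho_0$ there exists $K=K(\rho,\rho_0,A^* )$ such that $\big\|\prod_{i=s+1}^tA_i\big\|\le K\rho^{t-s}$ for all integers $0\le s<t$.
   Context: $\|\cdot\|$ denotes the Euclidean operator norm and $\rho(A)$ the spectral radius (maximal modulus of the complex eigenvalues) of a matrix $A$. *)

(* Defs.v *)
From HB Require Import structures.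
From mathcomp Require Import all_boot all_order all_algebra.
From mathcomp Require Import all_classical all_reals.
From mathcomp Require Import ereal topology normedtype sequences exp.
From mathcomp Require Import complex.
Set Implicit Arguments.
Unset Strict Implicit.
Unset Printing Implicit Defensive.
Import Order.TTheory GRing.Theory Num.Theory.
Local Open Scope ring_scope.
Local Open Scope classical_set_scope.
Local Open Scope ereal_scope.
Local Open Scope ring_scope.

Definition vnorm (R : realType) (d : nat) (x : 'cV[R]_d) : R :=
  Num.sqrt (\sum_(i < d) x i 0 ^+ 2).

Definition opnorm (R : realType) (d : nat) (A : 'M[R]_d) : R :=
  sup [set vnorm (A *m x) | x in [set x : 'cV[R]_d | vnorm x <= 1]].

Definition cplx_mx (R : realType) (d : nat) (A : 'M[R]_d) : 'M[complex.complex R]_d :=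
  map_mx (fun a : R => complex.Complex a 0) A.

(* spectral radius: max modulus of the complex eigenvalues
   (written as the sup of the finite set of moduli; sup set0 = 0) *)
Definition spectral_radius (R : realType) (d : nat) (A : 'M[R]_d) : R :=
  sup [set complex.ComplexField.Normc.normc l
      | l in [set l : complex.complex R | eigenvalue (cplx_mx A) l]].

Definition pvar_norm (R : realType) (d : nat) (p : R) (A : nat -> 'M[R]_d)
    : \bar R :=
  poweR
   (ereal_sup [set (\sum_(0 <= k <oo) ((powR (opnorm (A (n k.+1) - A (n k))) p)%:E))%E
              | n in [set n : nat -> nat | (1 <= n 0)%N /\ forall k, (n k < n k.+1)%N]])
   p^-1.

(* Main.v *)
Require Import Defs.
From HB Require Import structures.
From mathcomp Require Import all_boot all_order all_algebra.
From mathcomp Require Import all_classical all_reals.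
From mathcomp Require Import ereal topology normedtype sequences exp.
From mathcomp Require Import complex.
From mathcomp Require Import ring lra.
Import Order.TTheory GRing.Theory Num.Theory.
Local Open Scope ring_scope.
Set Implicit Arguments.
Unset Strict Implicit.
Unset Printing Implicit Defensive.
Local Open Scope classical_set_scope.
Local Open Scope ring_scope.
Section MN.
Variable T : numDomainType.
Definition mn m n (M : 'M[T]_(m,n)) : T := \sum_i \sum_j `|M i j|.

Lemma mn_ge0 m n (M : 'M[T]_(m,n)) : 0 <= mn M.
Proof. by apply: sumr_ge0 => i _; apply: sumr_ge0 => j _. Qed.

Lemma mn_entry m n (M : 'M[T]_(m,n)) i j : `|M i j| <= mn M.
Proof.
rewrite /mn (bigD1 i) //= (bigD1 j) //= -addrA lerDl.
by apply: addr_ge0; apply: sumr_ge0 => *; [|apply: sumr_ge0] => *.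
Qed.

Lemma mnD m n (M N : 'M[T]_(m,n)) : mn (M + N) <= mn M + mn N.
Proof.
rewrite /mn -big_split /=; apply: ler_sum => i _; rewrite -big_split /=.
by apply: ler_sum => j _; rewrite mxE ler_normD.
Qed.

Lemma mnN m n (M : 'M[T]_(m,n)) : mn (- M) = mn M.
Proof. by apply: eq_bigr => i _; apply: eq_bigr => j _; rewrite mxE normrN. Qed.

Lemma mnB m n (M N : 'M[T]_(m,n)) : mn (M - N) <= mn M + mn N.
Proof. by rewrite -(mnN N) mnD. Qed.

Lemma mnZ m n a (M : 'M[T]_(m,n)) : mn (a *: M) = `|a| * mn M.
Proof.
rewrite /mn big_distrr; apply: eq_bigr => i _; rewrite big_distrr.
by apply: eq_bigr => j _; rewrite mxE normrM.
Qed.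

Lemma mnM m n p (M : 'M[T]_(m,n)) (N : 'M[T]_(n,p)) : mn (M *m N) <= mn M * mn N.
Proof.
pose c k := \sum_j `|N j k|.
have -> : mn N = \sum_k c k by rewrite /mn exchange_big.
rewrite /mn big_distrl /=; apply: ler_sum => i _.
rewrite big_distrl /=.
apply: (@le_trans _ _ (\sum_k \sum_j `|M i j| * c k)).
  apply: ler_sum => k _; rewrite mxE; apply: (le_trans (ler_norm_sum _ _ _)).
  apply: ler_sum => j _; rewrite normrM; apply: ler_wpM2l => //.
  by rewrite /c (bigD1 j) //= lerDl; apply: sumr_ge0.
rewrite exchange_big /=; apply: ler_sum => j _; rewrite big_distrr /=.
by [].
Qed.

Lemma mn_scalar n (a : T) : mn (a%:M : 'M[T]_n) = `|a| * n%:R.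
Proof.
have -> : (n%:R : T) = \sum_(i < n) (1:T) by rewrite sumr_const card_ord.
rewrite /mn mulr_sumr; apply: eq_bigr => i _.
rewrite (bigD1 i) //= big1 ?addr0 ?mxE ?eqxx ?mulr1n ?mulr1 //.
by move=> j /negbTE ji; rewrite mxE eq_sym ji mulr0n normr0.
Qed.

Lemma mn_gt0 m n (M : 'M[T]_(m,n)) : M != 0 -> 0 < mn M.
Proof.
move=> /eqP nz; have [i [j Mij]] : exists i j, M i j != 0.
  case: (pselect (exists i j, M i j != 0)) => // H; exfalso; apply: nz.
  apply/matrixP => i j; rewrite mxE; apply/eqP/negPn/negP => h.
  by apply: H; exists i, j.
by apply: (lt_le_trans _ (mn_entry M i j)); rewrite normr_gt0.
Qed.
End MN.
Section Real.
Variable R : realType.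

Lemma sup_le_ub (S : set R) b : (forall x, S x -> x <= b) -> 0 <= b -> sup S <= b.
Proof.
move=> H b0; have [->|/set0P Sn] := eqVneq S set0; first by rewrite sup0.
by apply: ge_sup => // y /H.
Qed.

Lemma le_sup_elt (S : set R) b x : S x -> (forall y, S y -> y <= b) -> x <= sup S.
Proof.
move=> Sx H; apply: sup_upper_bound => //; split; first by exists x.
by exists b => y /H.
Qed.

Lemma sqrt_sum_le_sum_abs n (a : 'I_n -> R) :
  Num.sqrt (\sum_i a i ^+ 2) <= \sum_i `|a i|.
Proof.
have S0 : 0 <= \sum_i `|a i| by apply: sumr_ge0.
rewrite -(ger0_norm S0) -sqrtr_sqr ler_sqrt ?sqr_ge0 // expr2 big_distrl /=.
apply: ler_sum => i _.
rewrite -[a i ^+ 2]real_normK ?num_real // expr2 ler_wpM2l //.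
by rewrite (bigD1 i) //= lerDl; apply: sumr_ge0.
Qed.

Lemma abs_le_sqrt_sum n (a : 'I_n -> R) i : `|a i| <= Num.sqrt (\sum_i a i ^+ 2).
Proof.
rewrite -sqrtr_sqr ler_sqrt; last by apply: sumr_ge0 => *; apply: sqr_ge0.
by rewrite (bigD1 i) //= lerDl; apply: sumr_ge0 => *; apply: sqr_ge0.
Qed.

Variable d : nat.

Lemma vnorm_ge0 (x : 'cV[R]_d) : 0 <= vnorm x.
Proof. exact: sqrtr_ge0. Qed.

Lemma vnorm_le_mn (x : 'cV[R]_d) : vnorm x <= mn x.
Proof.
rewrite /vnorm /mn (le_trans (sqrt_sum_le_sum_abs (fun i => x i 0))) //.
by apply: ler_sum => i _; rewrite big_ord1.
Qed.

Lemma entry_le_vnorm (x : 'cV[R]_d) i : `|x i 0| <= vnorm x.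
Proof. exact: (abs_le_sqrt_sum (fun i => x i 0)). Qed.

Lemma opnorm_ub (A : 'M[R]_d) x : vnorm x <= 1 -> vnorm (A *m x) <= mn A.
Proof.
move=> x1; apply: (le_trans (vnorm_le_mn _)); rewrite /mn.
apply: ler_sum => i _; rewrite big_ord1 mxE.
apply: (le_trans (ler_norm_sum _ _ _)); apply: ler_sum => j _.
rewrite normrM -[leRHS]mulr1 ler_wpM2l //.
exact: (le_trans (entry_le_vnorm x j)).
Qed.

Lemma opnorm_le_mn (A : 'M[R]_d) : opnorm A <= mn A.
Proof.
apply: sup_le_ub; last exact: mn_ge0.
by move=> y [x /= x1 <-]; apply: opnorm_ub.
Qed.

Lemma opnorm_ge0 (A : 'M[R]_d) : 0 <= opnorm A.
Proof.
apply: (le_trans _ (le_sup_elt (b := mn A) _ _)).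
- exact: (vnorm_ge0 (A *m 0)).
- by exists 0 => //=; rewrite /vnorm big1 ?sqrtr0 // => i _; rewrite mxE expr0n.
by move=> y [x /= x1 <-]; apply: opnorm_ub.
Qed.

Lemma entry_le_opnorm (A : 'M[R]_d) i j : `|A i j| <= opnorm A.
Proof.
pose e : 'cV[R]_d := \col_k (k == j)%:R.
have ve : vnorm e = 1.
  rewrite /vnorm (bigD1 j) //= big1 ?addr0 ?mxE ?eqxx ?expr1n ?sqrtr1 //.
  by move=> k /negbTE kj; rewrite mxE kj expr0n.
have Ae : (A *m e) i 0 = A i j.
  rewrite mxE (bigD1 j) //= big1 ?addr0 ?mxE ?eqxx ?mulr1 //.
  by move=> k /negbTE kj; rewrite mxE kj mulr0.
apply: (le_trans _ (le_sup_elt (b := mn A) _ _)).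
- by rewrite -Ae; apply: entry_le_vnorm.
- by exists e => //=; rewrite ve.
by move=> y [x /= x1 <-]; apply: opnorm_ub.
Qed.

Lemma mn_le_opnorm (A : 'M[R]_d) : mn A <= (d * d)%:R * opnorm A.
Proof.
have -> : ((d * d)%:R : R) = \sum_(i < d) \sum_(j < d) 1.
  by rewrite !sumr_const !card_ord -mulrnA.
rewrite /mn big_distrl /=; apply: ler_sum => i _; rewrite big_distrl /=.
by apply: ler_sum => j _; rewrite mul1r entry_le_opnorm.
Qed.
End Real.
Fixpoint Fk (T : numFieldType) (r0 r1 b : T) (k : nat) : T :=
  if k is k'.+1 then 1 + b * Fk r0 r1 b k' / (r1 - r0) else 0.

Section PowBound.
Variable T : numFieldType.
Variables (r0 r1 b : T).
Hypothesis r0_ge0 : 0 <= r0.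
Hypothesis r01 : r0 < r1.
Hypothesis b_ge0 : 0 <= b.

Lemma Fk_ge0 k : 0 <= Fk r0 r1 b k.
Proof.
elim: k => [|k IH] //=; apply: addr_ge0 => //.
by apply: divr_ge0; [apply: mulr_ge0|rewrite subr_ge0 ltW].
Qed.

Lemma Fk_ge1 k : 1 <= Fk r0 r1 b k.+1.
Proof.
rewrite /= lerDl; apply: divr_ge0; first by apply: mulr_ge0 => //; apply: Fk_ge0.
by rewrite subr_ge0 ltW.
Qed.

Lemma Fk_step k : b * Fk r0 r1 b k + r0 * Fk r0 r1 b k.+1 <= Fk r0 r1 b k.+1 * r1.
Proof.
rewrite -subr_ge0.
have -> : Fk r0 r1 b k.+1 * r1 - (b * Fk r0 r1 b k + r0 * Fk r0 r1 b k.+1) = r1 - r0.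
  rewrite /=; field; by rewrite subr_eq0 gt_eqF.
by rewrite subr_ge0 ltW.
Qed.

Variable n : nat.
Variable B : 'M[T]_n.+1.

Lemma pow_bound_list (rs : seq T) :
  (forall z, z \in rs -> `|z| <= r0 /\ mn (B - z%:M) <= b) ->
  forall Q : 'M[T]_n.+1, Q * \prod_(z <- rs) (B - z%:M) = 0 ->
  forall k, mn (Q * B ^+ k) <= mn Q * Fk r0 r1 b (size rs) * r1 ^+ k.
Proof.
elim: rs => [|z rs IH] Hz Q HQ k.
  rewrite big_nil mulr1 in HQ; rewrite HQ mul0r /= mulr0 mul0r.
  by rewrite /mn big1 // => i _; rewrite big1 // => j _; rewrite mxE normr0.
have [zr0 zb] := Hz z (mem_head _ _).
pose Q' := Q * (B - z%:M).
have HQ' : Q' * \prod_(z <- rs) (B - z%:M) = 0 by rewrite /Q' -mulrA; move: HQ; rewrite big_cons.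
have IH' : forall k, mn (Q' * B ^+ k) <= mn Q' * Fk r0 r1 b (size rs) * r1 ^+ k.
  apply: IH HQ' => y yin; apply: Hz; by rewrite inE yin orbT.
have mQ' : mn Q' <= mn Q * b.
  by apply: (le_trans (mnM _ _)); apply: ler_wpM2l => //; apply: mn_ge0.
set s := size rs; rewrite [size _]/= -/s.
have mQ0 := mn_ge0 Q.
elim: k => [|k IHk].
  by rewrite expr0 !mulr1 -[leLHS]mulr1 ler_wpM2l // Fk_ge1.
have eq : Q * B ^+ k.+1 = Q' * B ^+ k + z *: (Q * B ^+ k).
  rewrite /Q' exprS mulrBr mulrBl !mulrA.
  have -> : Q * z%:M = z *: Q by rewrite -mul_mx_scalar.
  by rewrite -scalerAl subrK.
rewrite eq; apply: (le_trans (mnD _ _)); rewrite mnZ.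
apply: (le_trans (lerD (IH' k) (ler_wpM2l (normr_ge0 z) IHk))).
apply: (le_trans (lerD (ler_wpM2r _ (ler_wpM2r (Fk_ge0 _) mQ')) (ler_wpM2r _ zr0))).
- by apply: exprn_ge0; apply: (le_trans r0_ge0 (ltW r01)).
- by apply: mulr_ge0; [apply: mulr_ge0 => //; apply: Fk_ge0|apply: exprn_ge0; apply: (le_trans r0_ge0 (ltW r01))].
have -> : mn Q * b * Fk r0 r1 b s * r1 ^+ k + r0 * (mn Q * Fk r0 r1 b s.+1 * r1 ^+ k)
  = (mn Q * r1 ^+ k) * (b * Fk r0 r1 b s + r0 * Fk r0 r1 b s.+1) by ring.
have -> : mn Q * Fk r0 r1 b s.+1 * r1 ^+ k.+1 = (mn Q * r1 ^+ k) * (Fk r0 r1 b s.+1 * r1).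
  by rewrite exprS; ring.
apply: ler_wpM2l; last exact: Fk_step.
by apply: mulr_ge0 => //; apply: exprn_ge0; apply: (le_trans r0_ge0 (ltW r01)).
Qed.
End PowBound.
Lemma eig_le_mn (T : numFieldType) n (A : 'M[T]_n) l : eigenvalue A l -> `|l| <= mn A.
Proof.
case/eigenvalueP => v vA vnz; have h := mnM v A.
rewrite vA mnZ [mn v * _]mulrC in h.
by rewrite -(ler_pM2r (mn_gt0 vnz)).
Qed.

Section Cplx.
Variable R : realType.
Local Notation C := (complex.complex R).
Lemma cplx_mxE n (A : 'M[R]_n) : cplx_mx A = map_mx (complex.real_complex R) A.
Proof. by []. Qed.
Lemma normcE (l : C) : `|l| = (complex.ComplexField.Normc.normc l)%:C%C.
Proof. by []. Qed.
Lemma normC_real (x : R) : `|x%:C%C| = (`|x|)%:C%C :> C.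
Proof. by rewrite normcE /= expr0n addr0 sqrtr_sqr. Qed.

Lemma mn_cplx n (A : 'M[R]_n) : mn (cplx_mx A) = (mn A)%:C%C.
Proof.
rewrite /mn rmorph_sum; apply: eq_bigr => i _; rewrite rmorph_sum.
by apply: eq_bigr => j _; rewrite cplx_mxE mxE normC_real.
Qed.

Lemma cplx_mxX n (B : 'M[R]_n.+1) k : cplx_mx (B ^+ k) = cplx_mx B ^+ k.
Proof.
elim: k => [|k IH]; first by rewrite !expr0 cplx_mxE map_mx1.
by rewrite !exprS !cplx_mxE map_mxM -!cplx_mxE IH.
Qed.

Lemma Fk_cplx (r0 r1 b : R) k :
  (Fk r0 r1 b k)%:C%C = Fk r0%:C%C r1%:C%C b%:C%C k :> C.
Proof.
elim: k => [|k IH] /=; first by rewrite rmorph0.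
rewrite rmorphD rmorph1 rmorphM fmorphV rmorphM rmorphB -IH. by [].
Qed.

Lemma real_pow_bound n (B : 'M[R]_n.+1) (al r0 r1 : R) :
  0 <= r0 -> r0 < r1 -> mn B <= al ->
  (forall l, eigenvalue (cplx_mx B) l -> complex.ComplexField.Normc.normc l <= r0) ->
  forall k, mn (B ^+ k) <= n.+1%:R * Fk r0 r1 (al + r0 * n.+1%:R) n.+1 * r1 ^+ k.
Proof.
move=> r00 r01 Bal Heig k.
set Bc := cplx_mx B.
have [rs Hrs] := closed_field_poly_normal (char_poly Bc).
rewrite (monicP (char_poly_monic Bc)) scale1r in Hrs.
have srs : size rs = n.+1.
  by have := size_char_poly Bc; rewrite Hrs size_prod_XsubC => -[].
have al0 : 0 <= al by apply: le_trans Bal; apply: mn_ge0.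
have Hz : forall z, z \in rs -> `|z| <= r0%:C%C /\ mn (Bc - z%:M) <= (al + r0 * n.+1%:R)%:C%C.
  move=> z zin.
  have ez : eigenvalue Bc z by rewrite eigenvalue_root_char Hrs root_prod_XsubC.
  have zr : `|z| <= r0%:C%C by rewrite normcE complex.lecR; apply: Heig.
  split => //; apply: (le_trans (mnB _ _)).
  rewrite mn_scalar /Bc mn_cplx rmorphD rmorphM rmorph_nat.
  apply: lerD; first by rewrite complex.lecR.
  by apply: ler_wpM2r => //; apply: ler0n.
have H0 : 1 * \prod_(z <- rs) (Bc - z%:M) = 0.
  rewrite mul1r -(Cayley_Hamilton Bc) Hrs rmorph_prod /=.
  by apply: eq_bigr => z _; rewrite rmorphB /= horner_mx_X horner_mx_C.
have := pow_bound_list (r0:=r0%:C%C) (r1:=r1%:C%C) _ _ _ Hz H0 k.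
rewrite mul1r -cplx_mxX mn_scalar normr1 mul1r mn_cplx srs -Fk_cplx.
rewrite -rmorphXn -(rmorph_nat (complex.real_complex R)) -!rmorphM.
move=> h; rewrite -complex.lecR; apply: h => //.
- by rewrite complex.lecR.
- by rewrite complex.ltcR.
rewrite complex.lecR; apply: addr_ge0 => //; apply: mulr_ge0 => //.
Qed.
End Cplx.
Section Block.
Variable R : realType.
Variable d : nat.
Variable A : nat -> 'M[R]_d.
Variables (a rho delta : R) (m : nat).
Hypothesis a1 : 1 <= a.
Hypothesis rho0 : 0 < rho.
Hypothesis rhoa : rho <= a.
Hypothesis m0 : (0 < m)%N.
Hypothesis hA : forall i, (0 < i)%N -> mn (A i) <= a.

Definition bad k := delta < mn (A k.+2 - A k.+1).
Definition cnt s t := (\sum_(s <= k < t) (bad k : nat))%N.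

Hypothesis Hgood : forall s, cnt s (s + m) = 0%N ->
  mn (\prod_(s <= i < s + m) A i.+1) <= rho ^+ m.

Let c : R := d%:R + 1.
Let g : R := (a / rho) ^+ m.

Lemma a0 : 0 <= a. Proof. exact: le_trans ler01 a1. Qed.

Lemma prod_le_pos L s : mn (\prod_(s <= i < s + L.+1) A i.+1) <= a ^+ L.+1.
Proof.
elim: L => [|L IH].
  by rewrite addn1 big_nat1 expr1; apply: hA.
rewrite addnS big_nat_recr /=; last by rewrite leq_addr.
apply: (le_trans (mnM _ _)); rewrite exprSr.
apply: ler_pM => //; first exact: mn_ge0.
  exact: mn_ge0.
by apply: hA.
Qed.

Lemma prod_le L s : mn (\prod_(s <= i < s + L) A i.+1) <= c * a ^+ L.
Proof.
case: L => [|L].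
  rewrite addn0 big_geq // mn_scalar normr1 mul1r expr0 mulr1 /c.
  by rewrite lerDl.
apply: (le_trans (prod_le_pos L s)); rewrite -[leLHS]mul1r ler_wpM2r //.
  by apply: exprn_ge0; apply: a0.
by rewrite /c lerDr.
Qed.

Lemma g1 : 1 <= g.
Proof. by apply: exprn_ege1; rewrite ler_pdivlMr // mul1r. Qed.

Lemma aE L : a ^+ L = rho ^+ L * (a / rho) ^+ L.
Proof. by rewrite -exprMn mulrC divfK // gt_eqF. Qed.

Lemma cnt_split s t u : (s <= t)%N -> (t <= u)%N -> cnt s u = (cnt s t + cnt t u)%N.
Proof. by move=> st tu; rewrite /cnt (big_cat_nat st tu). Qed.

Lemma block_bound L s :
  mn (\prod_(s <= i < s + L) A i.+1) <= c * rho ^+ L * g ^+ (cnt s (s + L)).+1.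
Proof.
have c0 : 0 <= c by rewrite /c addr_ge0.
have g0 : 0 <= g by apply: le_trans g1.
elim/ltn_ind: L s => L IH s.
case: (ltnP L m) => Lm.
  apply: (le_trans (prod_le L s)); rewrite aE mulrA ler_wpM2l //.
    by apply: mulr_ge0 => //; apply: exprn_ge0; apply: ltW.
  apply: (le_trans (ler_weXn2l _ (ltnW Lm))); first by rewrite ler_pdivlMr // mul1r.
  by rewrite -[leLHS]expr1 ler_weXn2l // g1.
have [L' eL] : exists L', L = (m + L')%N by exists (L - m)%N; rewrite subnKC.
subst L.
rewrite addnA (big_cat_nat (leq_addr _ _) (leq_addr _ _)) /=.
rewrite (cnt_split (leq_addr m s) (leq_addr _ _)).
have lt : (L' < m + L')%N by rewrite -{1}(add0n L') ltn_add2r.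
have IH' := IH L' lt (s + m)%N.
apply: (le_trans (mnM _ _)).
case: (eqVneq (cnt s (s + m)) 0%N) => [c0'|cpos].
  rewrite c0' add0n.
  apply: (le_trans (ler_pM (mn_ge0 _) (mn_ge0 _) (Hgood c0') IH')).
  rewrite exprD; set k := (cnt _ _).+1.
  by rewrite le_eqVlt; apply/orP; left; apply/eqP; ring.
have Hb : mn (\prod_(s <= i < s + m) A i.+1) <= rho ^+ m * g.
  rewrite /g -aE; have [m' em] : exists m', m = m'.+1 by exists m.-1; rewrite prednK.
  rewrite em; exact: prod_le_pos.
apply: (le_trans (ler_pM (mn_ge0 _) (mn_ge0 _) Hb IH')).
have k1 : ((cnt (s + m) (s + m + L')).+2 <= (cnt s (s + m) + cnt (s + m) (s + m + L')).+1)%N.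
  by rewrite ltnS -[X in (X < _)%N]add0n ltn_add2r lt0n.
apply: (le_trans _ (ler_pM _ _ (lexx (c * rho ^+ (m + L'))) (ler_weXn2l g1 k1))); last 2 first.
- by apply: mulr_ge0 => //; apply: exprn_ge0; apply: ltW.
- by apply: exprn_ge0.
have -> : g ^+ (cnt (s + m) (s + m + L')).+2 = g * g ^+ (cnt (s + m) (s + m + L')).+1.
  by rewrite exprS.
rewrite exprD.
by rewrite le_eqVlt; apply/orP; left; apply/eqP; ring.
Qed.
End Block.
Section Diff.
Variable R : realType.
Variable d : nat.
Let c : R := d%:R + 1.

Lemma mn_sum I (r : seq I) (P : pred I) (F : I -> 'M[R]_d) :
  mn (\sum_(i <- r | P i) F i) <= \sum_(i <- r | P i) mn (F i).
Proof.
elim/big_rec2: _ => [|i y1 y2 _ H].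
  by rewrite /mn big1 // => i _; rewrite big1 // => j _; rewrite mxE normr0.
by apply: (le_trans (mnD _ _)); rewrite lerD2l.
Qed.

Lemma prodX_le (a : R) (X : nat -> 'M[R]_d) L : 0 <= a ->
  (forall l, (l < L)%N -> mn (X l) <= a) ->
  mn (\prod_(0 <= l < L) X l) <= c * a ^+ L.
Proof.
move=> a0; elim: L => [|L IH] H.
  by rewrite big_geq // mn_scalar normr1 mul1r expr0 mulr1 /c lerDl.
rewrite big_nat_recr //= exprSr mulrA; apply: (le_trans (mnM _ _)).
apply: ler_pM; [exact: mn_ge0|exact: mn_ge0| |exact: H].
by apply: IH => l lL; apply: H; apply: ltnW.
Qed.

Lemma prod_diff (a e : R) (X Y : nat -> 'M[R]_d) L : 1 <= a -> 0 <= e ->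
  (forall l, (l < L)%N -> [/\ mn (X l) <= a, mn (Y l) <= a & mn (X l - Y l) <= e]) ->
  mn (\prod_(0 <= l < L) X l - \prod_(0 <= l < L) Y l) <= L%:R * c * a ^+ L * e.
Proof.
move=> a1 e0; have a0 : 0 <= a by apply: le_trans ler01 a1.
have c0 : 0 <= c by rewrite /c addr_ge0.
elim: L => [|L IH] H.
  by rewrite !big_geq // subrr mul0r !mul0r /mn big1 // => i _; rewrite big1 // => j _; rewrite mxE normr0.
have [HX HY HXY] := H L (ltnSn L).
have IH' := IH (fun l lL => H l (ltnW lL)).
have PX := prodX_le a0 (fun l lL => (let: And3 h _ _ := H l (ltnW lL) in h)).
rewrite !big_nat_recr //=.
have -> : \prod_(0 <= i < L) X i * X L - \prod_(0 <= i < L) Y i * Y L =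
  \prod_(0 <= i < L) X i * (X L - Y L) + (\prod_(0 <= i < L) X i - \prod_(0 <= i < L) Y i) * Y L.
  by rewrite mulrBr mulrBl addrA subrK.
apply: (le_trans (mnD _ _)).
apply: (le_trans (lerD (mnM _ _) (mnM _ _))).
apply: (le_trans (lerD (ler_pM (mn_ge0 _) (mn_ge0 _) PX HXY) (ler_pM (mn_ge0 _) (mn_ge0 _) IH' HY))).
have aL : a ^+ L <= a ^+ L.+1 by rewrite exprS ler_peMl // exprn_ge0.
rewrite -[(L.+1)%:R]natr1 exprS.
have -> : (L%:R + 1) * c * (a * a ^+ L) * e = c * (a * a ^+ L) * e + L%:R * c * a ^+ L * e * a by ring.
apply: lerD; last by rewrite le_eqVlt; apply/orP; left; apply/eqP; ring.
rewrite ler_wpM2r // ler_wpM2l //.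
by rewrite -exprS.
Qed.
End Diff.
Lemma pvar_partial (R : realType) d (p Astar : R) (A : nat -> 'M[R]_d) :
  1 <= p -> (pvar_norm p A <= Astar%:E)%E ->
  forall T, \sum_(0 <= k < T) powR (opnorm (A k.+2 - A k.+1)) p <= powR Astar p.
Proof.
move=> p1 hpv T.
set S := \sum_(0 <= k < T) _.
have S0 : 0 <= S by apply: sumr_ge0 => k _; apply: powR_ge0.
have p0 : 0 < p by apply: lt_le_trans p1.
move: hpv; rewrite /pvar_norm; set X := [set _ | _ in _] => hpv.
have Xx0 : X (\sum_(0 <= k <oo) ((powR (opnorm (A k.+2 - A k.+1)) p)%:E))%E.
  by exists succn.
have le1 : (S%:E <= \sum_(0 <= k <oo) ((powR (opnorm (A k.+2 - A k.+1)) p)%:E))%E.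
  rewrite /S -sumEFin; apply: nneseries_lim_ge => k _ _; rewrite lee_fin; apply: powR_ge0.
have le2 : (S%:E <= ereal_sup X)%E.
  by apply: (le_trans le1); apply: ereal_sup_ubound.
have le3 : (poweR S%:E p^-1 <= poweR (ereal_sup X) p^-1)%E.
  apply: gt0_ler_poweR => //.
  - by rewrite invr_ge0 ltW.
  - by rewrite in_itv /= lee_fin S0 leey.
  - by rewrite in_itv /= leey andbT (le_trans _ le2) // lee_fin.
have le4 := le_trans le3 hpv.
rewrite poweR_EFin lee_fin in le4.
have Sp : S = powR (powR S p^-1) p.
  by rewrite -powRrM mulVf ?gt_eqF // powRr1.
rewrite Sp; apply: ge0_ler_powR => //; first exact: ltW.
- by rewrite nnegrE powR_ge0.
- by rewrite nnegrE (le_trans _ le4) // powR_ge0.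
Qed.
Lemma cnt0_bad (R : realType) d (A : nat -> 'M[R]_d) (delta : R) s t k :
  cnt A delta s t = 0%N -> (s <= k < t)%N -> ~~ bad A delta k.
Proof.
move=> h /andP[sk kt].
rewrite (cnt_split A delta sk (ltnW kt)) (cnt_split A delta (leqnSn k) kt) in h.
move: h => /eqP; rewrite !addn_eq0 => /and3P[_ + _].
by rewrite /cnt big_nat1; case: (bad A delta k).
Qed.

Lemma good_block (R : realType) d (A : nat -> 'M[R]_d) (a delta Gr : R) m s :
  1 <= a -> 0 <= delta -> (forall i, (0 < i)%N -> mn (A i) <= a) ->
  cnt A delta s (s + m) = 0%N -> mn (A s.+1 ^+ m) <= Gr ->
  mn (\prod_(s <= i < s + m) A i.+1) <=
    Gr + m%:R * (d%:R + 1) * a ^+ m * (m%:R * delta).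
Proof.
move=> a1 de0 hA hc hG.
have e : \prod_(s <= i < s + m) A i.+1 = \prod_(0 <= l < m) A (s + l).+1.
  rewrite -{1}[s]add0n big_addn addKn; apply: eq_bigr => i _; by rewrite addnC.
have eB : A s.+1 ^+ m = \prod_(0 <= l < m) A s.+1 by rewrite prodr_const_nat subn0.
rewrite e; set P := \prod_(0 <= l < m) _.
have -> : P = A s.+1 ^+ m + (P - \prod_(0 <= l < m) A s.+1) by rewrite eB addrC subrK.
apply: (le_trans (mnD _ _)); apply: lerD => //.
apply: prod_diff => //; first by apply: mulr_ge0 => //; apply: ler0n.
move=> l lm; split; [exact: hA|exact: hA|].
have -> : A (s + l).+1 - A s.+1 = \sum_(s <= k < s + l) (A k.+2 - A k.+1).
  by rewrite (telescope_sumr (fun k => A k.+1)) // leq_addr.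
apply: (le_trans (mn_sum _ _ _)).
apply: (@le_trans _ _ (\sum_(s <= k < s + l) delta)).
  apply: ler_sum_nat => k /andP[sk kl].
  have kt : (k < s + m)%N by apply: (leq_trans kl); rewrite leq_add2l ltnW.
  have nb : ~~ bad A delta k by apply: (cnt0_bad hc); rewrite sk kt.
  by move: nb; rewrite /bad -leNgt.
rewrite sumr_const_nat addKn -[delta *+ l]mulr_natl.
by apply: ler_wpM2r => //; rewrite ler_nat ltnW.
Qed.

Lemma bernoulli (R : realFieldType) (h : R) m : 0 <= h -> 1 + m%:R * h <= (1 + h) ^+ m.
Proof.
move=> h0; elim: m => [|m IH]; first by rewrite mul0r addr0 expr0.
rewrite exprS; apply: (@le_trans _ _ ((1 + h) * (1 + m%:R * h))); last first.
  by apply: ler_wpM2l => //; apply: addr_ge0.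
rewrite -natr1; have : 0 <= m%:R * h * h by apply: mulr_ge0 => //; apply: mulr_ge0.
move=> H; rewrite -subr_ge0; have -> : (1 + h) * (1 + m%:R * h) - (1 + (m%:R + 1) * h) = m%:R * h * h by ring.
done.
Qed.

Section SR.
Variable R : realType.
Variable d : nat.

Lemma normc_ge0 (l : complex.complex R) : 0 <= complex.ComplexField.Normc.normc l.
Proof. by rewrite -complex.ler0c -normcE. Qed.

Lemma eig_normc_le (B : 'M[R]_d) l : eigenvalue (cplx_mx B) l ->
  complex.ComplexField.Normc.normc l <= mn B.
Proof. by move=> /eig_le_mn; rewrite mn_cplx normcE complex.lecR. Qed.

Lemma SR_le_mn (B : 'M[R]_d) : spectral_radius B <= mn B.
Proof.
apply: sup_le_ub; last exact: mn_ge0.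
by move=> y [l /= el <-]; apply: eig_normc_le.
Qed.

Lemma SR_ge0 (B : 'M[R]_d) : 0 <= spectral_radius B.
Proof.
rewrite /spectral_radius; set S := [set _ | _ in _].
have [->|/set0P [y Sy]] := eqVneq S set0; first by rewrite sup0.
apply: (le_trans _ (le_sup_elt (b := mn B) Sy _)).
  by case: Sy => l _ <-; apply: normc_ge0.
by move=> z [l /= el <-]; apply: eig_normc_le.
Qed.

Lemma normc_le_SR (B : 'M[R]_d) l : eigenvalue (cplx_mx B) l ->
  complex.ComplexField.Normc.normc l <= spectral_radius B.
Proof.
move=> el; apply: (le_sup_elt (b := mn B)); first by exists l.
by move=> z [l' /= el' <-]; apply: eig_normc_le.
Qed.

Lemma pow_bound_all (B : 'M[R]_d) (al r0 r1 : R) :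
  0 <= r0 -> r0 < r1 -> mn B <= al ->
  (forall l, eigenvalue (cplx_mx B) l -> complex.ComplexField.Normc.normc l <= r0) ->
  forall k, mn (B ^+ k) <= d%:R * Fk r0 r1 (al + r0 * d%:R) d * r1 ^+ k.
Proof.
case: d B => [|n] B r00 r01 Bal He k.
  by rewrite /mn big_ord0 !mul0r.
exact: real_pow_bound.
Qed.
End SR.

Unset Implicit Arguments.

Theorem lemmaC8 (R : realType) (d : nat) (p Astar rho0 rho : R) :
  1 <= p -> rho0 < 1 -> rho0 < rho ->
  exists K : R,
    forall A : nat -> 'M[R]_d,
      (forall i : nat, (0 < i)%N -> opnorm (A i) <= Astar) ->
      sup [set spectral_radius (A i) | i in [set i : nat | (0 < i)%N]] = rho0 ->
      (pvar_norm p A <= Astar%:E)%E ->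
      forall s t : nat, (s < t)%N ->
        opnorm (\prod_(s <= i < t) A i.+1) <= K * rho ^+ (t - s).
Proof.
move=> p1 rho01 rr.
have SRle : forall (A : nat -> 'M[R]_d), (forall i, (0 < i)%N -> opnorm (A i) <= Astar) ->
   sup [set spectral_radius (A i) | i in [set i : nat | (0 < i)%N]] = rho0 ->
   forall i, (0 < i)%N -> spectral_radius (A i) <= rho0.
  move=> A hA hs i i0; rewrite -hs; apply: (le_sup_elt (b := (d * d)%:R * Astar)).
    by exists i.
  move=> y [j /= j0 <-]; apply: (le_trans (SR_le_mn _)); apply: (le_trans (mn_le_opnorm _)).
  by apply: ler_wpM2l; [apply: ler0n | apply: hA].
case: (lerP rho 0) => [rho_le0|rho_gt0].
  exists 0 => A hA hs hpv s t st; exfalso.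
  have h1 := SRle A hA hs 1%N isT; have h2 := SR_ge0 (A 1%N).
  lra.
set r0 := Num.max rho0 0.
have r00 : 0 <= r0 by rewrite le_max lexx orbT.
have r0rho : r0 < rho by rewrite gt_max rr rho_gt0.
set r1 := (r0 + rho) / 2.
have r01 : r0 < r1 by rewrite /r1; lra.
have r1rho : r1 < rho by rewrite /r1; lra.
have r1_gt0 : 0 < r1 by lra.
set As := Num.max Astar 0.
have As0 : 0 <= As by rewrite le_max lexx orbT.
set al := (d * d)%:R * As.
have al0 : 0 <= al by apply: mulr_ge0 => //; apply: ler0n.
set G := d%:R * Fk r0 r1 (al + r0 * d%:R) d.
have G0 : 0 <= G.
  apply: mulr_ge0; first exact: ler0n.
  by apply: Fk_ge0 => //; apply: addr_ge0 => //; apply: mulr_ge0 => //; apply: ler0n.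
set a := 1 + rho + al.
have a1 : 1 <= a by rewrite /a; lra.
have rhoa : rho <= a by rewrite /a; lra.
set c : R := d%:R + 1.
have c0 : 0 < c by rewrite /c ltr_pwDr ?ler0n.
set h := rho / r1 - 1.
have h0 : 0 < h by rewrite /h subr_gt0 ltr_pdivlMr // mul1r.
set m := (Num.Def.archi_bound (2 * G / h)).+1.
have m0 : (0 < m)%N by [].
have hm : 2 * G <= (rho / r1) ^+ m.
  have Gh : 0 <= 2 * G / h by apply: divr_ge0; [lra | exact: ltW].
  have := archi_boundP Gh; set bnd := Num.Def.archi_bound _ => hb.
  have -> : rho / r1 = 1 + h by rewrite /h; lra.
  apply: le_trans (bernoulli m (ltW h0)).
  have : 2 * G < bnd%:R * h by rewrite -ltr_pdivrMr.
  rewrite /m -natr1; nra.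
have Gm : G * r1 ^+ m <= rho ^+ m / 2.
  have -> : rho ^+ m = (rho / r1) ^+ m * r1 ^+ m by rewrite -exprMn divfK ?gt_eqF.
  have r1m : 0 < r1 ^+ m by apply: exprn_gt0.
  rewrite ler_pdivlMr //; nra.
have am0 : 0 < a ^+ m by apply: exprn_gt0; lra.
have mR0 : 0 < (m%:R : R) by rewrite ltr0n.
set delta := rho ^+ m / (2 * (m%:R * m%:R * c * a ^+ m)).
have rm0 : 0 < rho ^+ m by apply: exprn_gt0.
have delta0 : 0 < delta.
  by apply: divr_gt0 => //; apply: mulr_gt0 => //; apply: mulr_gt0 => //; apply: mulr_gt0 => //; apply: mulr_gt0.
have blk : m%:R * c * a ^+ m * (m%:R * delta) = rho ^+ m / 2.
  rewrite /delta; field.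
  by rewrite !gt_eqF.
set D' : R := (d * d)%:R + 1.
have D0 : 0 < D' by rewrite /D' ltr_pwDr ?ler0n.
set eta := powR (delta / D') p.
have eta0 : 0 < eta by apply: powR_gt0; apply: divr_gt0.
set M := Num.Def.archi_bound (powR Astar p / eta).
exists (c * ((a / rho) ^+ m) ^+ M.+1).
move=> A hA hs hpv s t st.
have hA' : forall i, (0 < i)%N -> mn (A i) <= a.
  move=> i i0; apply: (le_trans (mn_le_opnorm _)); rewrite /a.
  have : (d * d)%:R * opnorm (A i) <= al.
    apply: ler_wpM2l; first exact: ler0n.
    by apply: (le_trans (hA i i0)); rewrite le_max lexx.
  lra.
have eig : forall i, (0 < i)%N -> forall l, eigenvalue (cplx_mx (A i)) l ->
    complex.ComplexField.Normc.normc l <= r0.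
  move=> i i0 l el; apply: (le_trans (normc_le_SR el)).
  by apply: (le_trans (SRle A hA hs i i0)); rewrite le_max lexx.
have hgood : forall s, cnt A delta s (s + m) = 0%N ->
    mn (\prod_(s <= i < s + m) A i.+1) <= rho ^+ m.
  move=> s' hc.
  apply: (le_trans (good_block (Gr := G * r1 ^+ m) a1 (ltW delta0) hA' hc _)).
    apply: pow_bound_all => //; last by apply: eig.
    apply: (le_trans (mn_le_opnorm _)); apply: ler_wpM2l; first exact: ler0n.
    by apply: (le_trans (hA s'.+1 isT)); rewrite le_max lexx.
  rewrite -/c blk; apply: (le_trans (lerD Gm (lexx _))).
  by rewrite -splitr.
have bb := @block_bound R d A a rho delta m a1 rho_gt0 rhoa m0 hA' hgood (t - s) s.
rewrite (subnKC (ltnW st)) in bb.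
have hcnt : (cnt A delta s t <= M)%N.
  have le0 : (cnt A delta s t <= cnt A delta 0 t)%N.
    by rewrite (cnt_split A delta (leq0n s) (ltnW st)) leq_addl.
  apply: (leq_trans le0).
  have Hs := pvar_partial p1 hpv t.
  have hc : (cnt A delta 0 t)%:R * eta <= \sum_(0 <= k < t) powR (opnorm (A k.+2 - A k.+1)) p.
    rewrite /cnt natr_sum big_distrl /=; apply: ler_sum_nat => k _.
    case hb: (bad A delta k); last by rewrite mul0r powR_ge0.
    rewrite mul1r /eta; apply: ge0_ler_powR; first by apply: (le_trans ler01).
    - by rewrite nnegrE divr_ge0 // ltW.
    - by rewrite nnegrE opnorm_ge0.
    move: hb; rewrite /bad => hb.
    rewrite ler_pdivrMr //; apply: ltW; apply: (lt_le_trans hb).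
    apply: (le_trans (mn_le_opnorm _)); rewrite [leRHS]mulrC.
    by apply: ler_wpM2r; [exact: opnorm_ge0 | rewrite /D' lerDl].
  have hc2 : (cnt A delta 0 t)%:R <= powR Astar p / eta.
    by rewrite ler_pdivlMr //; apply: (le_trans hc Hs).
  have := archi_boundP (le_trans (ler0n _ _) hc2); rewrite -/M => hM.
  by rewrite -ltnS -(ltr_nat R); apply: (le_lt_trans hc2); apply: (lt_le_trans hM); rewrite ler_nat.
apply: (le_trans (opnorm_le_mn _)); apply: (le_trans bb).
rewrite -/c mulrAC; apply: ler_wpM2r; first by apply: exprn_ge0; apply: ltW.
apply: ler_wpM2l; first exact: ltW.
apply: ler_weXn2l; last by rewrite ltnS.
by apply: exprn_ege1; rewrite ler_pdivlMr // mul1r.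
Qed.
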